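(* Let $g$ be either $F$, or $F_{\cdot,c}$ for some fixed $c\in\mathbb{C}^d$, or $f$ in the case $s=n$, with respective parameter spaces $\mathbb{C}^r\times\mathbb{C}^d$, $\mathbb{C}^r$, $\mathbb{C}^r$. If $g_{\alpha^*}(x)=0$ has a nondegenerate solution in $(\mathbb{C}^* )^n$ for some parameter value $\alpha^*$, then there is a nonempty Zariski open subset of the parameter space such that for all $\alpha$ in it, all solutions in $(\mathbb{C}^* )^n$ of $g_\alpha(x)=0$ are nondegenerate.
   Context: Let $N\in\mathbb{C}^{s\times r}$ have rank $s$, $W\in\mathbb{C}^{d\times n}$ have rank $d=n-s$, $B\in\mathbb{Z}^{n\times r}$. $\circ$ is the Hadamard product and $x^B\in\mathbb{C}^r$ has $j$-th entry $\prod_i x_i^{b_{ij}}$. $f(\kappa,x)=N(\kappa\circ x^B)$ with parameters $\kappa\in\mathbb{C}^r$; $F(\kappa,c,x)=\begin{pmatrix}f(\kappa,x)\\ Wx-c\end{pmatrix}$ with parameters $(\kappa,c)\in\mathbb{C}^r\times\mathbb{C}^d$; $F_{\cdot,c}(\kappa,x)=F(\kappa,c,x)$ for fixed $c$, with parameters $\kappa$. For a parametric system $g$ with $t$ equations, $g_\alpha=g(\alpha,\cdot)$, and a solution $x^*\in(\mathbb{C}^* )^n$ of $g_\alpha(x)=0$ is nondegenerate if the Jacobian of $g_\alpha$ with respect to $x$ at $x^*$ has rank $t$. *)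

(* Defs.v *)
From HB Require Import structures.
From mathcomp Require Import all_boot all_order all_algebra.
From mathcomp Require Import Rstruct.
From mathcomp Require Import complex.
From mathcomp Require Import mpoly.
Set Implicit Arguments. Unset Strict Implicit. Unset Printing Implicit Defensive.
Import GRing.Theory Num.Theory.
Local Open Scope ring_scope.

Definition C : numClosedFieldType := (Rdefinitions.R)[i].

Definition in_torus (n : nat) (x : 'cV[C]_n) : Prop := forall i, x i 0 != 0.

Definition monvec (n r : nat) (B : 'M[int]_(n, r)) (x : 'cV[C]_n) : 'cV[C]_r :=
  \col_j \prod_(i < n) (x i 0) ^ (B i j).

Definition dmon (n r : nat) (B : 'M[int]_(n, r)) (x : 'cV[C]_n) (j : 'I_r) (k : 'I_n) : C :=
  (B k j)%:~R * (x k 0) ^ (B k j - 1) * \prod_(i < n | i != k) (x i 0) ^ (B i j).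

(* f(kappa, x) = N (kappa o x^B) *)
Definition fsys (s r n : nat) (N : 'M[C]_(s, r)) (B : 'M[int]_(n, r))
  (kappa : 'cV[C]_r) (x : 'cV[C]_n) : 'cV[C]_s :=
  N *m (\col_j (kappa j 0 * monvec B x j 0)).

Definition Jf (s r n : nat) (N : 'M[C]_(s, r)) (B : 'M[int]_(n, r))
  (kappa : 'cV[C]_r) (x : 'cV[C]_n) : 'M[C]_(s, n) :=
  \matrix_(l, k) \sum_(j < r) N l j * kappa j 0 * dmon B x j k.

(* F(kappa, c, x) = (f(kappa, x) ; W x - c) *)
Definition Fsys (s r n d : nat) (N : 'M[C]_(s, r)) (W : 'M[C]_(d, n)) (B : 'M[int]_(n, r))
  (kappa : 'cV[C]_r) (c : 'cV[C]_d) (x : 'cV[C]_n) : 'cV[C]_(s + d) :=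
  col_mx (fsys N B kappa x) (W *m x - c).

Definition JF (s r n d : nat) (N : 'M[C]_(s, r)) (W : 'M[C]_(d, n)) (B : 'M[int]_(n, r))
  (kappa : 'cV[C]_r) (x : 'cV[C]_n) : 'M[C]_(s + d, n) :=
  col_mx (Jf N B kappa x) W.

(* Zariski open subsets of C^m: complements of common zero sets of finitely
   many polynomials, i.e. U = { a | p(a) <> 0 for some p in S }. *)
Definition zariski_open (m : nat) (U : 'cV[C]_m -> Prop) : Prop :=
  exists S : seq {mpoly C[m]},
    forall a : 'cV[C]_m, U a <-> has (fun p => p.@[fun i => a i 0] != 0) S.

(* A parametric system g with parameter space C^m, t equations in n unknowns,
   given together with its Jacobian Jg with respect to x. *)
Definition nondegenerate (m n t : nat)
  (Jg : 'cV[C]_m -> 'cV[C]_n -> 'M[C]_(t, n)) (alpha : 'cV[C]_m) (x : 'cV[C]_n) : Prop :=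
  \rank (Jg alpha x) = t.

Definition generically_nondegenerate (m n t : nat)
  (g : 'cV[C]_m -> 'cV[C]_n -> 'cV[C]_t)
  (Jg : 'cV[C]_m -> 'cV[C]_n -> 'M[C]_(t, n)) : Prop :=
  (exists (alpha0 : 'cV[C]_m) (x0 : 'cV[C]_n),
      in_torus x0 /\ g alpha0 x0 = 0 /\ nondegenerate Jg alpha0 x0) ->
  exists U : 'cV[C]_m -> Prop,
    zariski_open U /\ (exists a, U a) /\
    forall alpha, U alpha ->
      forall x, in_torus x -> g alpha x = 0 -> nondegenerate Jg alpha x.

(* Main.v *)
Require Import Defs.
From HB Require Import structures.
From mathcomp Require Import all_boot all_order all_algebra.
From mathcomp Require Import Rstruct complex mpoly.
From mathcomp Require Import zify ring.
Import Order.TTheory GRing.Theory Num.Theory.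
Local Open Scope ring_scope.

Section Decomp.
Variable n : nat.
Local Notation wid := (widen_ord (leqnSn n)).

Definition mshr (m : 'X_{1..n.+1}) : 'X_{1..n} := [multinom m (wid i) | i < n].

Definition cpol (P : {mpoly C[n.+1]}) (e : nat) : {mpoly C[n]} :=
  \sum_(m <- msupp P | m ord_max == e) P@_m *: 'X_[mshr m].

Lemma mshr_inj (m1 m2 : 'X_{1..n.+1}) :
  mshr m1 = mshr m2 -> m1 ord_max = m2 ord_max -> m1 = m2.
Proof.
move=> /mnmP h hmax; apply/mnmP => i.
case: (unliftP ord_max i) => [j ->|->] //.
have -> : lift ord_max j = wid j by apply/val_inj; rewrite /= /bump leqNgt ltn_ord.
by have := h j; rewrite !mnmE.
Qed.

Lemma max_lt_msize (P : {mpoly C[n.+1]}) m : m \in msupp P -> (m ord_max < msize P)%N.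
Proof.
move=> /msize_mdeg_lt; apply: leq_ltn_trans.
by rewrite mdegE (bigD1 ord_max) //= leq_addr.
Qed.

Lemma meval_cpol (P : {mpoly C[n.+1]}) (v : 'I_n.+1 -> C) :
  P.@[v] = \sum_(e < msize P) (cpol P e).@[fun i => v (wid i)] * v ord_max ^+ e.
Proof.
rewrite mevalE.
have E e : (cpol P e).@[fun i => v (wid i)] * v ord_max ^+ e =
   \sum_(m <- msupp P) (if m ord_max == e then
       P@_m * \prod_(i < n.+1) v i ^+ m i else 0).
  rewrite /cpol rmorph_sum /= mulr_suml big_mkcond /=; apply: eq_bigr => m _.
  case: eqP => // <-; rewrite mevalZ mevalX big_ord_recr /= -mulrA; congr (_ * (_ * _)).
  by apply: eq_bigr => i _; rewrite mnmE.
rewrite (eq_bigr _ (fun (e : 'I_(msize P)) _ => E e)) exchange_big /= [LHS]big_seq [RHS]big_seq; apply: eq_bigr => m mP.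
rewrite (bigD1 (Ordinal (max_lt_msize _ _ mP))) //= eqxx [X in _ + X]big1 ?addr0 //.
by move=> e; rewrite -val_eqE /= eq_sym => /negbTE ->.
Qed.

Lemma cpol_neq0 (P : {mpoly C[n.+1]}) : P != 0 ->
  exists2 e, (e < msize P)%N & cpol P e != 0.
Proof.
rewrite -msupp_eq0; case E: (msupp P) => [|m0 s] // _.
have m0P : m0 \in msupp P by rewrite E inE eqxx.
exists (m0 ord_max); first exact: max_lt_msize.
apply/eqP => /(congr1 (mcoeff (mshr m0))); rewrite mcoeff0 /cpol raddf_sum /=.
rewrite big_mkcond (bigD1_seq m0) ?msupp_uniq //= eqxx mcoeffZ mcoeffX eqxx mulr1.
rewrite [X in _ + X]big1 ?addr0.
  by apply/eqP; rewrite mcoeff_eq0 negbK.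
move=> m hne; case: eqP => // hmx; rewrite mcoeffZ mcoeffX.
case: eqP => [h|]; last by rewrite mulr0.
by case/eqP: hne; apply: mshr_inj.
Qed.

End Decomp.
Arguments cpol {n}.
Arguments mshr {n}.
Arguments meval_cpol {n}.
Arguments cpol_neq0 {n}.

Lemma nat_roots (p : {poly C}) : p != 0 -> exists t, ~~ root p t.
Proof.
move=> p0; pose rs := [seq (i%:R : C) | i <- iota 0 (size p)].
have : ~~ all (root p) rs.
  apply/negP => /(max_poly_roots p0) H.
  have : uniq rs by rewrite map_inj_uniq ?iota_uniq //; by move=> i j /eqP; rewrite eqr_nat => /eqP.
  by move/H; rewrite size_map size_iota ltnn.
by case/allPn => t _ ?; exists t.
Qed.

Lemma mpoly_nonroot (n : nat) (P : {mpoly C[n]}) : P != 0 ->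
  exists v : 'I_n -> C, P.@[v] != 0.
Proof.
elim: n P => [|n IH] P P0.
  exists (fun i => 0).
  have -> : P = (P@_0%MM)%:MP.
    apply: msize1_polyC; rewrite msizeE; apply/bigmax_leqP_seq => m _ _.
    by rewrite ltnS leqn0 mdegE big_ord0.
  rewrite mevalC; apply: contra P0 => /eqP h.
  apply/eqP/mpolyP => m; rewrite mcoeff0.
  have -> : m = 0%MM by apply/mnmP => -[].
  exact: h.
case: (cpol_neq0 P P0) => e eS ce.
case: (IH _ ce) => w hw.
pose p := \poly_(k < msize P) (cpol P k).@[w].
have p0 : p != 0.
  apply/eqP => h; move: (congr1 (fun q : {poly C} => q`_e) h); rewrite /= coef_poly eS coef0.
  by move/eqP; rewrite (negbTE hw).
case: (nat_roots _ p0) => t ht.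
pose v (i : 'I_n.+1) := if insub (val i) is Some j then w j else t.
exists v; rewrite meval_cpol.
have hv : (fun i : 'I_n => v (widen_ord (leqnSn n) i)) =1 w.
  move=> i; rewrite /v insubT /=; first by rewrite ltn_ord.
  by move=> h; congr w; apply: val_inj.
under eq_bigr do rewrite (meval_eq _ hv).
have -> : v ord_max = t by rewrite /v insubF //= ltnn.
move: ht; rewrite /root horner_poly.
by under eq_bigr do rewrite mulrC.
Qed.

Lemma leq_expn_base (a b e : nat) : (a <= b)%N -> (a ^ e <= b ^ e)%N.
Proof. by move=> ab; elim: e => // e IH; rewrite !expnS leq_mul. Qed.

Section Deg.
Variable m : nat.
Implicit Types (f g : {mpoly C[m]}).

Lemma msizeM_bnd f g a b : (msize f <= a.+1)%N -> (msize g <= b.+1)%N ->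
  (msize (f * g) <= (a + b).+1)%N.
Proof.
move=> hf hg.
have [->|f0] := eqVneq f 0; first by rewrite mul0r msize0.
have [->|g0] := eqVneq g 0; first by rewrite mulr0 msize0.
rewrite msizeM //.
have := msize_poly_eq0 f; have := msize_poly_eq0 g.
rewrite (negbTE f0) (negbTE g0) => /negbT h1 /negbT h2.
rewrite -lt0n in h1; rewrite -lt0n in h2.
case: (msize f) h2 hf => // x _ hf; rewrite addSn /=.
move: (msize g) hg h1 => z hg h1; lia.
Qed.

Lemma msizeX_bnd f a k : (msize f <= a.+1)%N -> (msize (f ^+ k) <= (a * k).+1)%N.
Proof.
move=> hf; elim: k => [|k IH]; first by rewrite expr0 msize1 muln0.
by rewrite exprS mulnS; apply: msizeM_bnd.
Qed.

Lemma msize_prod_bnd (I : Type) (r : seq I) (F : I -> {mpoly C[m]}) (a : I -> nat) :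
  (forall i, msize (F i) <= (a i).+1)%N ->
  (msize (\prod_(i <- r) F i) <= (\sum_(i <- r) a i).+1)%N.
Proof.
move=> h; elim: r => [|x r IH]; first by rewrite !big_nil msize1.
by rewrite !big_cons; apply: msizeM_bnd.
Qed.

End Deg.
Arguments msizeM_bnd {m f g a b}.
Arguments msizeX_bnd {m f a} k.
Arguments msize_prod_bnd {m I} r {F a}.

Lemma key (m1 m2 : nat) (p : 'I_m2 -> {mpoly C[m1]}) (q D : {mpoly C[m1]}) :
  (m1 <= m2)%N -> D != 0 ->
  exists P : {mpoly C[m2]}, P != 0 /\
   forall y : 'I_m1 -> C, q.@[y] != 0 -> D.@[y] = 0 ->
     P.@[fun i => (p i).@[y] / q.@[y]] = 0.
Proof.
move=> m12 D0.
pose a := maxn (\max_(i < m2) msize (p i)) (maxn (msize q) (msize D)).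
have hpa i : (msize (p i) <= a.+1)%N.
  apply: leq_trans (leqnSn _); apply: leq_trans (leq_maxl _ _).
  exact: (leq_bigmax i).
have hqa : (msize q <= a.+1)%N by rewrite /a; lia.
have hDa : (msize D <= a.+1)%N by rewrite /a; lia.
pose c := (m2.+1 * a).+1.
pose k := (c ^ m1)%N.
pose K := (m2 * k)%N.
pose Dom := ({ffun 'I_m2 -> 'I_k.+1} * 'I_k.+1)%type.
pose ez (e : Dom) (i : 'I_m2) : nat := e.1 i.
pose et (e : Dom) : nat := e.2.
pose sz (e : Dom) : nat := (\sum_(i < m2) ez e i)%N.
have szK e : (sz e <= K)%N.
  rewrite /K -[m2 in (m2 * k)%N]card_ord -sum_nat_const.
  by apply: leq_sum => i _; rewrite /ez -ltnS ltn_ord.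
pose G (e : Dom) : {mpoly C[m1]} :=
  (\prod_(i < m2) p i ^+ ez e i) * q ^+ (K - sz e) * D ^+ et e.
pose T := (a * (m2.+1 * k))%N.
have GT e : (msize (G e) <= T.+1)%N.
  have h1 := msize_prod_bnd (index_enum 'I_m2) (fun i => msizeX_bnd (ez e i) (hpa i)).
  have h2 := msizeX_bnd (K - sz e) hqa.
  have h3 := msizeX_bnd (et e) hDa.
  have h4 := msizeM_bnd (msizeM_bnd h1 h2) h3.
  apply: (leq_trans h4); rewrite ltnS -big_distrr /= -!mulnDr leq_mul2l.
  apply/orP; right; rewrite (subnKC (szK e)).
  rewrite /K mulSn addnC.
  rewrite leq_add2r -ltnS; exact: ltn_ord.
pose Cod := {ffun 'I_m1 -> 'I_T.+1}.
pose mono (f : Cod) : 'X_{1..m1} := [multinom (f i : nat) | i < m1].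
have card_lt : (#|{: Cod}| < #|{: Dom}|)%N.
  rewrite card_ffun card_prod card_ffun !card_ord.
  have h1 : (T.+1 <= c * k.+1)%N by rewrite /T /c; nia.
  have h2 : (T.+1 ^ m1 <= k * k.+1 ^ m1)%N.
    by apply: (leq_trans (leq_expn_base _ _ m1 h1)); rewrite expnMn.
  apply: (leq_ltn_trans h2).
  apply: (@leq_trans (k.+1 * k.+1 ^ m1)); first by rewrite ltn_mul2r expn_gt0 /= ltnSn.
  rewrite mulnC leq_mul2r; apply/orP; right; exact: leq_pexp2l.
pose A : 'M[C]_(#|{: Dom}|, #|{: Cod}|) :=
  \matrix_(i, j) (G (enum_val i))@_(mono (enum_val j)).
have : kermx A != 0.
  rewrite kermx_eq0 /row_free; apply/negP => /eqP hr.
  by move: (rank_leq_col A); rewrite hr leqNgt card_lt.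
case/rowV0Pn => v /sub_kermxP vA v0.
pose u i := v 0 i.
have Z : \sum_i u i *: G (enum_val i) = 0.
  apply/mpolyP => mm; rewrite mcoeff0 raddf_sum /=.
  under eq_bigr do rewrite mcoeffZ.
  case: (boolP [forall i, (mm i <= T)%N]) => hbox.
    pose f : Cod := [ffun i => inord (mm i)].
    have -> : mm = mono f.
      apply/mnmP => i; rewrite mnmE ffunE inordK //.
      by rewrite ltnS; apply: (forallP hbox).
    move: (congr1 (fun M : 'rV[C]_#|{: Cod}| => M 0 (enum_rank f)) vA); rewrite !mxE => H; apply: (eq_trans _ H).
    by apply: eq_bigr => i _; rewrite mxE enum_rankK.
  apply: big1 => i _.
  case/forallPn: hbox => l; rewrite -ltnNge => hl.
  rewrite memN_msupp_eq0 ?mulr0 //; apply: msize_mdeg_ge.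
  apply: (leq_trans (GT _)); apply: (leq_trans hl).
  by rewrite mdegE (bigD1 l) //= leq_addr.
have [i0 ui0] : exists i, u i != 0.
  apply/existsP; apply: contraR v0 => /existsPn h; apply/eqP/rowP => i.
  by rewrite mxE; apply/eqP; rewrite -[_ == _]negbK; apply: h.
pose PP j := [exists i, (u i != 0) && (et (enum_val i) == j)].
have exP : exists j, PP j by exists (et (enum_val i0)); apply/existsP; exists i0; rewrite ui0 eqxx.
case: (ex_minnP exP) => j Pj jmin.
pose R := \sum_i u i *: ((\prod_(l < m2) p l ^+ ez (enum_val i) l) *
      q ^+ (K - sz (enum_val i)) * D ^+ (et (enum_val i) - j)).
have ZR : D ^+ j * R = 0.
  rewrite -Z /R mulr_sumr; apply: eq_bigr => i _.
  case: (eqVneq (u i) 0) => [->|ui]; first by rewrite !scale0r mulr0.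
  have hj : (j <= et (enum_val i))%N.
    by apply: jmin; apply/existsP; exists i; rewrite ui eqxx.
  rewrite -scalerAr; congr (_ *: _).
  by rewrite /G -[in RHS](subnKC hj) exprD mulrCA.
have R0 : R = 0.
  by move/eqP: ZR; rewrite mulf_eq0 expf_eq0 (negbTE D0) andbF /= => /eqP.
pose mz (e : Dom) : 'X_{1..m2} := [multinom (ez e i) | i < m2].
pose P := \sum_i (if et (enum_val i) == j then u i else 0) *: 'X_[mz (enum_val i)].
exists P; split.
  case/existsP: Pj => i1 /andP[ui1 /eqP ei1].
  apply/eqP => /(congr1 (mcoeff (mz (enum_val i1)))); rewrite mcoeff0 raddf_sum /=.
  rewrite (bigD1 i1) //= mcoeffZ mcoeffX eqxx ei1 eqxx mulr1 big1 ?addr0.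
    by move/eqP; rewrite (negbTE ui1).
  move=> i ne; rewrite mcoeffZ mcoeffX.
  case: eqP => [hei|]; last by rewrite mul0r.
  case: eqP => [/mnmP hm|]; last by rewrite mulr0.
  exfalso; move/eqP: ne; apply; apply: enum_val_inj.
  move: (enum_val i) (enum_val i1) hm hei ei1 => [f1 o1] [f2 o2] hm /= h1 h2.
  congr (_, _); last by apply: val_inj; move: h1 h2; rewrite /et /= => -> ->.
  apply/ffunP => l; apply: val_inj; have := hm l; rewrite !mnmE.
  by rewrite /ez.
move=> y qy Dy.
have qK : q.@[y] ^+ K != 0 by rewrite expf_neq0.
apply/eqP; rewrite -(mulIr_eq0 _ (mulIf qK)) -[0](meval0 y) -R0 /R /P.
rewrite !rmorph_sum /= mulr_suml; apply/eqP; apply: eq_bigr => i _.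
rewrite !mevalZ !mevalM !mevalX !rmorphXn /= Dy expr0n rmorph_prod /=.
case: (eqVneq (u i) 0) => [->|ui]; first by rewrite if_same !mul0r.
have hj : (j <= et (enum_val i))%N.
  by apply: jmin; apply/existsP; exists i; rewrite ui eqxx.
have -> : (et (enum_val i) - j == 0)%N = (et (enum_val i) == j).
  by apply/idP/idP => /eqP h; apply/eqP; lia.
case: eqP => _ /=; last by rewrite !mul0r !mulr0.
rewrite mulr1 -mulrA; congr (_ * _).
have -> : \prod_(l < m2) (p l ^+ ez (enum_val i) l).@[y] =
    \prod_(l < m2) (p l).@[y] ^+ ez (enum_val i) l.
  by apply: eq_bigr => l _; rewrite rmorphXn.
under eq_bigr do rewrite mnmE (@expr_div_n C).
rewrite prodf_div prodrXr -(subnKC (szK (enum_val i))) exprD.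
rewrite subnKC ?szK //.
have qs : q.@[y] ^+ sz (enum_val i) != 0 by rewrite expf_neq0.
by rewrite mulrA divfK.
Qed.

Lemma core (m1 m2 n t : nat) (g : 'cV[C]_m2 -> 'cV[C]_n -> 'cV[C]_t)
  (Jg : 'cV[C]_m2 -> 'cV[C]_n -> 'M[C]_(t, n))
  (param : 'I_m2 -> {mpoly C[m1]}) (q : {mpoly C[m1]}) (Mp : 'M[{mpoly C[m1]}]_(t, n)) :
  ((t <= n)%N -> (m1 <= m2)%N) ->
  (forall alpha x, in_torus x -> g alpha x = 0 ->
     exists y : 'I_m1 -> C, q.@[y] != 0 /\
       (forall i, alpha i 0 = (param i).@[y] / q.@[y]) /\
       map_mx (meval y) Mp = Jg alpha x *m diag_mx x^T) ->
  generically_nondegenerate g Jg.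
Proof.
move=> hm hpar [a0 [x0 [tx0 [g0 nd0]]]].
have [y0 [qy0 [pa0 M0]]] := hpar _ _ tx0 g0.
have tn : (t <= n)%N by rewrite -[X in (X <= _)%N]nd0 rank_leq_col.
have m12 := hm tn.
have dfree (x : 'cV[C]_n) : in_torus x -> row_free (diag_mx x^T).
  move=> tx; rewrite row_free_unit unitmxE det_diag unitfE.
  by apply/prodf_neq0 => i _; rewrite mxE; apply: tx.
have : row_free (Jg a0 x0 *m diag_mx x0^T).
  by rewrite /row_free mxrankMfree ?dfree // nd0.
case/row_freeP => S HS.
pose D := \det (Mp *m map_mx (@mpolyC m1 C) S).
have evD y : D.@[y] = \det (map_mx (meval y) Mp *m S).
  rewrite /D -det_map_mx map_mxM; congr (\det (_ *m _)).
  by apply/matrixP => i j; rewrite !mxE; apply: mevalC.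
have D0 : D != 0.
  by apply/eqP => h; move: (evD y0); rewrite h meval0 M0 HS det1 => /eqP; rewrite eq_sym oner_eq0.
have [P [P0 HP]] := @key _ _ param q D m12 D0.
exists (fun a : 'cV[C]_m2 => P.@[fun i => a i 0] != 0); split.
  by exists [:: P] => a; rewrite /= orbF.
split.
  have [v hv] := @mpoly_nonroot _ P P0.
  exists (\col_i v i); rewrite (@meval_eq _ _ _ v) //.
  by move=> i; rewrite mxE.
move=> a Ua x tx gx; have [y [qy [pa My]]] := hpar _ _ tx gx.
rewrite /nondegenerate; case: (eqVneq (\rank (Jg a x)) t) => // hr.
exfalso; move/negP: Ua; apply; apply/eqP.
have -> : P.@[fun i => a i 0] = P.@[fun i => (param i).@[y] / q.@[y]].
  by apply: meval_eq => i; rewrite pa.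
apply: HP => //; rewrite evD My.
have nf : ~~ row_free (Jg a x *m diag_mx x^T *m S).
  apply/negP => /eqP hf.
  have : (\rank (Jg a x) < t)%N by rewrite ltn_neqAle hr rank_leq_row.
  rewrite -[X in (_ < X)%N]hf ltnNge; move/negP; apply.
  by rewrite -mulmxA mxrankM_maxl.
by move: nf; rewrite row_free_unit unitmxE unitfE negbK => /eqP.
Qed.

Lemma ker_param (s r : nat) (N : 'M[C]_(s, r)) (lam : 'cV[C]_r) :
  N *m lam = 0 -> exists mu : 'rV_(\rank (kermx N^T)), mu *m row_base (kermx N^T) = lam^T.
Proof.
move=> h; have : (lam^T <= kermx N^T)%MS by apply/sub_kermxP; rewrite -trmx_mul h trmx0.
by rewrite -(eq_row_base (kermx N^T)) => /submxP [D ->]; exists D.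
Qed.

Lemma expz_nat (x : C) (z : int) : 0 <= z -> x ^ z = x ^+ `|z|%N.
Proof. by move=> hz; rewrite -{1}(gez0_abs hz). Qed.

Lemma Jf_diag (s r n : nat) (N : 'M[C]_(s, r)) (B : 'M[int]_(n, r)) kappa x :
  in_torus x ->
  Jf N B kappa x *m diag_mx x^T =
  \matrix_(l, k) \sum_(j < r) N l j * (B k j)%:~R * (kappa j 0 * monvec B x j 0).
Proof.
move=> tx; apply/matrixP => l k; rewrite mul_mx_diag !mxE mulr_suml.
apply: eq_bigr => j _; rewrite /dmon !mxE.
have xk : x k 0 != 0 by apply: tx.
rewrite [in RHS](bigD1 k) //=.
have -> : x k 0 ^ B k j = x k 0 ^ (B k j - 1) * x k 0.
  by rewrite -{3}(expr1z (x k 0)) -expfzDr // subrK.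
by rewrite /=; ring.
Qed.

Section Param.
Variables (s r n : nat) (N : 'M[C]_(s, r)) (B : 'M[int]_(n, r)) (rk mx : nat)
  (Kb : 'M[C]_(rk, r)) (xp : 'I_n -> {mpoly C[rk + mx]}).

Definition lpol (j : 'I_r) : {mpoly C[rk + mx]} :=
  \sum_(i < rk) 'X_(lshift mx i) * (Kb i j)%:MP.
Definition aB : nat := \max_(i < n) \max_(j < r) `|B i j|%N.
Definition qpol : {mpoly C[rk + mx]} := \prod_(i < n) xp i ^+ aB.
Definition kpol (j : 'I_r) : {mpoly C[rk + mx]} :=
  lpol j * \prod_(i < n) xp i ^+ `|aB%:Z - B i j|%N.
Definition Mtop : 'M[{mpoly C[rk + mx]}]_(s, n) :=
  \matrix_(l, k) \sum_(j < r) (N l j * (B k j)%:~R)%:MP * lpol j.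

Lemma lpol_eval (mu : 'rV[C]_rk) (z : 'rV[C]_mx) j :
  (lpol j).@[fun i => row_mx mu z 0 i] = (mu *m Kb) 0 j.
Proof.
rewrite /lpol rmorph_sum /= !mxE; apply: eq_bigr => i _.
by rewrite mevalM mevalXU mevalC row_mxEl.
Qed.

Lemma qpol_eval y (x : 'cV[C]_n) : (forall i, (xp i).@[y] = x i 0) -> in_torus x ->
  qpol.@[y] != 0.
Proof.
move=> hx tx; rewrite /qpol rmorph_prod /=; apply/prodf_neq0 => i _.
by rewrite rmorphXn /= hx expf_neq0 //; apply: tx.
Qed.

Lemma kpol_eval y (x : 'cV[C]_n) (kappa : 'cV[C]_r) : (forall i, (xp i).@[y] = x i 0) -> in_torus x ->
  (forall j, (lpol j).@[y] = kappa j 0 * monvec B x j 0) ->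
  forall j, (kpol j).@[y] / qpol.@[y] = kappa j 0.
Proof.
move=> hx tx hl j; have q0 := qpol_eval _ _ hx tx.
apply: (mulIf q0); rewrite divfK //.
rewrite /kpol mevalM hl /qpol !rmorph_prod /= -mulrA; congr (_ * _).
rewrite !mxE -big_split /=; apply: eq_bigr => i _.
rewrite !rmorphXn /= hx.
have xi : x i 0 != 0 by apply: tx.
have hb : B i j <= aB%:Z.
  apply: (le_trans (ler_norm _)); rewrite -abszE lez_nat.
  apply: (leq_trans _ (leq_bigmax i)); exact: (leq_bigmax j).
rewrite -expz_nat ?subr_ge0 // -expfzDr //.
by rewrite addrCA subrr addr0.
Qed.

Lemma Mtop_eval y (x : 'cV[C]_n) (kappa : 'cV[C]_r) : in_torus x ->
  (forall j, (lpol j).@[y] = kappa j 0 * monvec B x j 0) ->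
  map_mx (meval y) Mtop = Jf N B kappa x *m diag_mx x^T.
Proof.
move=> tx hl; rewrite Jf_diag //; apply/matrixP => l k; rewrite !mxE.
rewrite rmorph_sum /=; apply: eq_bigr => j _.
by rewrite mevalM mevalC hl.
Qed.

End Param.

Arguments ker_param {s r N lam}.
Arguments qpol_eval {r n B rk mx xp y x}.
Arguments kpol_eval {r n B rk mx Kb xp y x kappa}.
Arguments Mtop_eval {s r n N B rk mx Kb y x kappa}.

Lemma rk_ker (s r : nat) (N : 'M[C]_(s, r)) : \rank N = s ->
  \rank (kermx N^T) = (r - s)%N /\ (s <= r)%N.
Proof.
move=> hN; rewrite mxrank_ker mxrank_tr hN; split => //.
by rewrite -hN rank_leq_col.
Qed.

Lemma Wbot_eval (d n m : nat) (W : 'M[C]_(d, n)) (xp : 'I_n -> {mpoly C[m]}) y (x : 'cV[C]_n) :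
  (forall k, (xp k).@[y] = x k 0) ->
  map_mx (meval y) (\matrix_(l, k) ((W l k)%:MP * xp k)) = W *m diag_mx x^T.
Proof.
move=> hx; apply/matrixP => l k; rewrite mul_mx_diag !mxE.
by rewrite mevalM mevalC hx.
Qed.

Arguments Wbot_eval {d n m W xp y x}.

Theorem mainTheorem10 (s r n d : nat) (N : 'M[C]_(s, r)) (W : 'M[C]_(d, n))
  (B : 'M[int]_(n, r)) :
  \rank N = s -> \rank W = d -> d = (n - s)%N ->
  [/\ generically_nondegenerate
        (fun alpha : 'cV[C]_(r + d) => Fsys N W B (usubmx alpha) (dsubmx alpha))
        (fun alpha : 'cV[C]_(r + d) => JF N W B (usubmx alpha)),
      (forall c : 'cV[C]_d,
        generically_nondegenerate
          (fun kappa : 'cV[C]_r => Fsys N W B kappa c)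
          (fun kappa : 'cV[C]_r => JF N W B kappa))
    & (s = n ->
        generically_nondegenerate
          (fun kappa : 'cV[C]_r => fsys N B kappa)
          (fun kappa : 'cV[C]_r => Jf N B kappa))].
Proof.
move=> hN hW hd.
have [rkN sr] := rk_ker _ _ _ hN.
have [rkW dn] := rk_ker _ _ _ hW.
set rk := \rank (kermx N^T) in rkN.
pose Kb := row_base (kermx N^T).
split.
-
  pose xp (k : 'I_n) : {mpoly C[rk + n]} := 'X_(rshift rk k).
  pose q := qpol r n B rk n xp.
  pose pc (l : 'I_d) := (\sum_(k < n) (W l k)%:MP * xp k) * q.
  pose param (i : 'I_(r + d)) :=
    match split i with inl j => kpol r n B rk n Kb xp j | inr l => pc l end.
  pose Mp := col_mx (Mtop s r n N B rk n Kb) (\matrix_(l, k) ((W l k)%:MP * xp k)).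
  apply: (@core (rk + n) (r + d) n (s + d) _ _ param q Mp).
    by rewrite rkN; lia.
  move=> a x tx; rewrite /Fsys => /eqP; rewrite col_mx_eq0 => /andP[/eqP hf /eqP hw].
  have [mu hmu] := ker_param hf.
  pose y := fun i => row_mx mu x^T 0 i.
  have hx k : (xp k).@[y] = x k 0 by rewrite /xp mevalXU /y row_mxEr mxE.
  have hl j : (lpol r rk n Kb j).@[y] = usubmx a j 0 * monvec B x j 0.
    by rewrite lpol_eval hmu !mxE.
  exists y; split; first exact: qpol_eval hx tx.
  split.
    move=> i; rewrite /param -{1}[a]vsubmxK; case: splitP => j hij.
      have -> : i = lshift d j by apply: val_inj.
      by rewrite col_mxEu (kpol_eval hx tx hl).
    have -> : i = rshift r j by apply: val_inj.
    rewrite col_mxEd /pc mevalM mulfK; last exact: qpol_eval hx tx.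
    move/eqP: hw; rewrite subr_eq0 => /eqP <-; rewrite !mxE rmorph_sum /=.
    by apply: eq_bigr => k _; rewrite mevalM mevalC hx.
  rewrite map_col_mx /JF mul_col_mx (Mtop_eval tx hl).
  by rewrite (Wbot_eval hx).
-
  move=> c H; case: (H) => a0 [x0 [tx0 [gx0 _]]]; move: H.
  move: gx0; rewrite /Fsys => /eqP; rewrite col_mx_eq0 => /andP[_ /eqP hw0].
  set rkw := \rank (kermx W^T) in rkW.
  pose Kw := row_base (kermx W^T).
  pose xp (k : 'I_n) : {mpoly C[rk + rkw]} :=
    (x0 k 0)%:MP + \sum_(i < rkw) 'X_(rshift rk i) * (Kw i k)%:MP.
  pose q := qpol r n B rk rkw xp.
  pose Mp := col_mx (Mtop s r n N B rk rkw Kb) (\matrix_(l, k) ((W l k)%:MP * xp k)).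
  apply: (@core (rk + rkw) r n (s + d) _ _ (kpol r n B rk rkw Kb xp) q Mp).
    by rewrite rkN rkW; lia.
  move=> kappa x tx; rewrite /Fsys => /eqP; rewrite col_mx_eq0 => /andP[/eqP hf /eqP hw].
  have [mu hmu] := ker_param hf.
  have hWx : W *m (x - x0) = 0.
    by rewrite mulmxBr; move/eqP: hw; rewrite subr_eq0 => /eqP ->; move/eqP: hw0; rewrite subr_eq0 => /eqP ->; rewrite subrr.
  have [tt htt] := ker_param hWx.
  pose y := fun i => row_mx mu tt 0 i.
  have hx k : (xp k).@[y] = x k 0.
    rewrite /xp mevalD mevalC rmorph_sum /=.
    have -> : \sum_(i < rkw) ('X_(rshift rk i) * (Kw i k)%:MP).@[y] = (tt *m Kw) 0 k.
      by rewrite mxE; apply: eq_bigr => i _; rewrite mevalM mevalXU mevalC /y row_mxEr.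
    by rewrite htt !mxE addrCA subrr addr0.
  have hl j : (lpol r rk rkw Kb j).@[y] = kappa j 0 * monvec B x j 0.
    by rewrite lpol_eval hmu !mxE.
  exists y; split; first exact: qpol_eval hx tx.
  split; first by move=> i; rewrite (kpol_eval hx tx hl).
  rewrite map_col_mx /JF mul_col_mx (Mtop_eval tx hl).
  by rewrite (Wbot_eval hx).
-
  move=> sn.
  pose xp (k : 'I_n) : {mpoly C[rk + n]} := 'X_(rshift rk k).
  pose q := qpol r n B rk n xp.
  apply: (@core (rk + n) r n s _ _ (kpol r n B rk n Kb xp) q (Mtop s r n N B rk n Kb)).
    by rewrite rkN; lia.
  move=> kappa x tx hf.
  have [mu hmu] := ker_param hf.
  pose y := fun i => row_mx mu x^T 0 i.
  have hx k : (xp k).@[y] = x k 0 by rewrite /xp mevalXU /y row_mxEr mxE.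
  have hl j : (lpol r rk n Kb j).@[y] = kappa j 0 * monvec B x j 0.
    by rewrite lpol_eval hmu !mxE.
  exists y; split; first exact: qpol_eval hx tx.
  split; first by move=> i; rewrite (kpol_eval hx tx hl).
  exact: (Mtop_eval tx hl).
Qed.
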